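(* Let $A\in\mathbb{R}^{n\times d}$, let $f:\mathbb{R}^n\to\mathbb{R}\cup\{+\infty\}$ and $g:\mathbb{R}^d\to\mathbb{R}\cup\{+\infty\}$ be closed convex functions, and suppose $f$ is $(1/\gamma)$-smooth for some $\gamma\ge 0$ and $g$ is $\mu$-strongly convex for some $\mu\ge 0$. Let $R=\|A\|_2$ and $F(x,y)=g(x)+\langle y,Ax\rangle-f^*(y)$. Run the DAPD method (described in the context) for $T\ge 1$ iterations with positive step sizes satisfying, for all $t=0,\dots,T-1$, $$\eta_t(1+B_{t-1}\mu)\ge \beta_t,\qquad \eta_t\tau_t\le \frac{1}{R^2},\qquad \frac{\beta_{t+1}}{\tau_{t+1}}\le \frac{\beta_t}{\tau_t}(1+\gamma\tau_t).$$ Define $\hat{x}^T=\frac{1}{B_{T-1}}\sum_{t=0}^{T-1}\beta_t\bar{x}^{t+1}$ and $\hat{y}^T=\frac{1}{B_{T-1}}\sum_{t=0}^{T-1}\beta_t y^{t+1}$. Then for every $x\in\mathbb{R}^d$ and $y\in\mathbb{R}^n$, $$F(\hat{x}^T,y)-F(x,\hat{y}^T)\le \frac{1}{B_{T-1}}\left(\frac{\beta_0}{2\tau_0}\|y^0-y\|_2^2+\frac12\|x^0-x\|_2^2\right).$$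
   Context: $f^*$ denotes the convex conjugate of $f$; $\operatorname{prox}_h(u)=\arg\min_v\{h(v)+\frac12\|v-u\|_2^2\}$. ''$f$ is $(1/\gamma)$-smooth with $\gamma\ge0$'' is the paper's convention: $\gamma=0$ means $f$ need not be smooth; $\gamma>0$ means $f$ is differentiable with $(1/\gamma)$-Lipschitz gradient. $\mu=0$ means $g$ is merely convex. DAPD method: given initial points $x^0\in\mathbb{R}^d$, $y^0\in\mathbb{R}^n$ and positive step sizes $\{\beta_t\},\{\eta_t\},\{\tau_t\}$, set $B_t=\sum_{k=0}^t\beta_k$ (with $B_{-1}=0$) and for $t=0,1,2,\dots$ compute $\bar{x}^{t+1}=\operatorname{prox}_{\eta_t g}(x^t-\eta_t A^\top y^t)$, $y^{t+1}=\operatorname{prox}_{\tau_t f^*}(y^t+\tau_t A\bar{x}^{t+1})$, $x^{t+1}=\operatorname{prox}_{B_t g}\big(x^0-\sum_{k=0}^t\beta_k A^\top y^{k+1}\big)$. *)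

(* Defs.v *)
From HB Require Import structures.
From mathcomp Require Import all_boot all_order all_algebra.
From mathcomp Require Import all_classical all_reals all_analysis.
Set Implicit Arguments. Unset Strict Implicit. Unset Printing Implicit Defensive.
Import Order.TTheory GRing.Theory Num.Theory.
Import numFieldNormedType.Exports.
Local Open Scope classical_set_scope.
Local Open Scope ring_scope.

Section DAPDDefs.
Variable R : realType.

Definition dot (k : nat) (u v : 'cV[R]_k) : R := \sum_(i < k) u i 0 * v i 0.
Definition norm2 (k : nat) (u : 'cV[R]_k) : R := Num.sqrt (dot u u).

Definition opnorm2 (m k : nat) (A : 'M[R]_(m, k)) : R :=
  sup [set norm2 (A *m v) | v in [set v : 'cV[R]_k | norm2 v <= 1]].

Definition closed_proper_convex (k : nat) (h : 'cV[R]_k -> \bar R) : Prop :=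
  [/\ forall x, h x != -oo%E,
      exists x, h x != +oo%E,
      lower_semicontinuous h &
      forall (x y : 'cV[R]_k) (l : R), 0 < l < 1 ->
        (h (l *: x + (1 - l) *: y)%R <= l%:E * h x + (1 - l)%:E * h y)%E ].

Definition strongly_convex (k : nat) (mu : R) (h : 'cV[R]_k -> \bar R) : Prop :=
  forall (x y : 'cV[R]_k) (l : R), 0 < l < 1 ->
    (h (l *: x + (1 - l) *: y)%R <=
       l%:E * h x + (1 - l)%:E * h y
       - (mu / 2 * l * (1 - l) * norm2 (x - y) ^+ 2)%:E)%E.

Definition grad (k : nat) (h : 'cV[R]_k -> R) (x : 'cV[R]_k) : 'cV[R]_k :=
  \col_(i < k) ('d h x (delta_mx i 0 : 'cV[R]_k)).

(* "f is (1/gamma)-smooth" in the paper's convention: gamma = 0 imposes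
   nothing; gamma > 0 means f is (finite-valued and) differentiable with a
   (1/gamma)-Lipschitz gradient w.r.t. the Euclidean norm. *)
Definition smooth_inv (k : nat) (gamma : R) (f : 'cV[R]_k -> \bar R) : Prop :=
  gamma = 0 \/
  (0 < gamma /\ exists h : 'cV[R]_k -> R,
     [/\ forall x, f x = (h x)%:E,
         forall x, differentiable h x &
         forall x y, norm2 (grad h x - grad h y) <= gamma^-1 * norm2 (x - y)]).

Definition conj_fun (k : nat) (f : 'cV[R]_k -> \bar R) (y : 'cV[R]_k) : \bar R :=
  ereal_sup [set ((dot y x)%:E - f x)%E | x in [set: 'cV[R]_k]].

(* is_prox h u v  <->  v = prox_h(u) = argmin_w { h(w) + 1/2 ||w - u||^2 }
   (v attains the minimum; for closed proper convex h the minimizer exists and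
   is unique, so this relation pins down the prox). *)
Definition is_prox (k : nat) (h : 'cV[R]_k -> \bar R) (u v : 'cV[R]_k) : Prop :=
  forall w : 'cV[R]_k,
    (h v + (2^-1 * norm2 (v - u) ^+ 2)%:E <= h w + (2^-1 * norm2 (w - u) ^+ 2)%:E)%E.

Definition scalef (k : nat) (c : R) (h : 'cV[R]_k -> \bar R) : 'cV[R]_k -> \bar R :=
  fun x => (c%:E * h x)%E.

(* B_{t-1} = sum_{k < t} beta_k  (so Bm 0 = B_{-1} = 0 and B_t = Bm t.+1). *)
Definition Bm (beta : nat -> R) (t : nat) : R := \sum_(k < t) beta k.

Definition saddleF (n d : nat) (A : 'M[R]_(n, d)) (f : 'cV[R]_n -> \bar R)
  (g : 'cV[R]_d -> \bar R) (x : 'cV[R]_d) (y : 'cV[R]_n) : \bar R :=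
  (g x + (dot y (A *m x))%:E - conj_fun f y)%E.

End DAPDDefs.

(* Main.v *)
Require Import Defs.
From HB Require Import structures.
From mathcomp Require Import all_boot all_order all_algebra.
From mathcomp Require Import all_classical all_reals all_analysis.
From mathcomp Require Import ring lra.
Import Order.TTheory GRing.Theory Num.Theory.
Import numFieldNormedType.Exports.
Local Open Scope ring_scope.

Module Helpers.
Set Implicit Arguments. Unset Strict Implicit. Unset Printing Implicit Defensive.
Local Open Scope classical_set_scope.
Local Open Scope ring_scope.

Section DotLemmas.
Variable R : realType.
Variable k : nat.
Implicit Types u v w : 'cV[R]_k.

Definition sq u : R := dot u u.

Lemma dotC u v : dot u v = dot v u.
Proof. by apply: eq_bigr => i _; rewrite mulrC. Qed.

Lemma dotDl u v w : dot (u + v) w = dot u w + dot v w.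
Proof. by rewrite /dot -big_split; apply: eq_bigr => i _; rewrite mxE mulrDl. Qed.

Lemma dotDr u v w : dot w (u + v) = dot w u + dot w v.
Proof. by rewrite dotC dotDl !(dotC w). Qed.

Lemma dotZl a u v : dot (a *: u) v = a * dot u v.
Proof. by rewrite /dot mulr_sumr; apply: eq_bigr => i _; rewrite mxE mulrA. Qed.

Lemma dotZr a u v : dot u (a *: v) = a * dot u v.
Proof. by rewrite dotC dotZl dotC. Qed.

Lemma dotNl u v : dot (- u) v = - dot u v.
Proof. by rewrite -scaleN1r dotZl mulN1r. Qed.

Lemma dotNr u v : dot u (- v) = - dot u v.
Proof. by rewrite dotC dotNl dotC. Qed.

Lemma dotBl u v w : dot (u - v) w = dot u w - dot v w.
Proof. by rewrite dotDl dotNl. Qed.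

Lemma dotBr u v w : dot w (u - v) = dot w u - dot w v.
Proof. by rewrite dotDr dotNr. Qed.

Lemma dot0l u : dot 0 u = 0.
Proof. by rewrite -(scale0r 0) dotZl mul0r. Qed.

Lemma dot0r u : dot u 0 = 0.
Proof. by rewrite dotC dot0l. Qed.

Lemma dot_suml (I : nat) (F : 'I_I -> 'cV[R]_k) v :
  dot (\sum_(i < I) F i) v = \sum_(i < I) dot (F i) v.
Proof.
elim: I F => [|I IH] F; first by rewrite !big_ord0 dot0l.
by rewrite !big_ord_recr /= dotDl IH.
Qed.

Lemma sq_ge0 u : 0 <= sq u.
Proof. by apply: sumr_ge0 => i _; rewrite -expr2 sqr_ge0. Qed.

Lemma norm2_sq u : norm2 u ^+ 2 = sq u.
Proof. by rewrite /norm2 sqr_sqrtr // sq_ge0. Qed.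

Lemma sqD u v : sq (u + v) = sq u + 2 * dot u v + sq v.
Proof. rewrite /sq !dotDl !dotDr (dotC v u); ring. Qed.

Lemma sqB u v : sq (u - v) = sq u - 2 * dot u v + sq v.
Proof. rewrite /sq !dotBl !dotBr (dotC v u); ring. Qed.

Lemma sqZ a u : sq (a *: u) = a ^+ 2 * sq u.
Proof. rewrite /sq dotZl dotZr; ring. Qed.

Lemma sq_eq0 u : sq u = 0 -> u = 0.
Proof.
move=> /eqP; rewrite /sq /dot psumr_eq0; last by move=> i _; rewrite -expr2 sqr_ge0.
move=> /allP H; apply/matrixP => i j; rewrite (ord1 j) mxE.
have := H i (mem_index_enum i); rewrite implyTb -expr2 sqrf_eq0 => /eqP //.
Qed.

Lemma dot_young c u v : 0 < c -> 2 * dot u v <= c * sq u + c^-1 * sq v.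
Proof.
move=> c0.
have := sq_ge0 (c *: u - v); rewrite sqB sqZ dotZl => H.
have E : c * sq u + c^-1 * sq v - 2 * dot u v = c^-1 * (c ^+ 2 * sq u - 2 * (c * dot u v) + sq v).
  by field; rewrite gt_eqF.
rewrite -subr_ge0 E; apply: mulr_ge0 => //; by rewrite invr_ge0 ltW.
Qed.

End DotLemmas.

Lemma dot_trmx (R : realType) n d (A : 'M[R]_(n, d)) (y : 'cV[R]_n) (x : 'cV[R]_d) :
  dot (A^T *m y) x = dot y (A *m x).
Proof.
rewrite /dot.
under eq_bigr => i _ do rewrite mxE big_distrl /=.
rewrite exchange_big /=; apply: eq_bigr => j _.
rewrite mxE big_distrr /=; apply: eq_bigr => i _; rewrite mxE; ring.
Qed.


Section Opnorm.
Variable R : realType.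

Lemma norm2_ge0 k (u : 'cV[R]_k) : 0 <= norm2 u.
Proof. exact: sqrtr_ge0. Qed.

Lemma norm2_le_sq k (u : 'cV[R]_k) : norm2 u <= 1 + sq u.
Proof. have := norm2_sq u; have := norm2_ge0 u; nra. Qed.

Lemma entry_sq_le k (v : 'cV[R]_k) j : v j 0 ^+ 2 <= sq v.
Proof.
rewrite /sq /dot (bigD1 j) //= -expr2 lerDl.
by apply: sumr_ge0 => i _; rewrite -expr2 sqr_ge0.
Qed.

Lemma opnorm_bound n d (A : 'M[R]_(n, d)) (e : 'cV[R]_d) :
  sq (A *m e) <= opnorm2 A ^+ 2 * sq e.
Proof.
set S := [set norm2 (A *m v) | v in [set v : 'cV[R]_d | norm2 v <= 1]].
pose M := \sum_(i < n) \sum_(j < d) `|A i j|.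
have hub : has_ubound S.
  exists (1 + \sum_(i < n) M ^+ 2) => _ [v /= Hv <-].
  apply: (le_trans (norm2_le_sq _)); rewrite lerD2l.
  rewrite /sq /dot; apply: ler_sum => i _; rewrite -expr2.
  have Hvj : forall j, `|v j 0| <= 1.
    move=> j; have := entry_sq_le v j; rewrite -norm2_sq.
    have := norm2_ge0 v => h0 h1.
    have h2 : v j 0 ^+ 2 <= 1 by nra.
    rewrite -(ler_pXn2r (n:=2)) // ?nnegrE ?normr_ge0 //.
    by rewrite real_normK ?num_real // expr1n.
  have Hi : `|(A *m v) i 0| <= M.
    rewrite mxE; apply: (le_trans (ler_norm_sum _ _ _)).
    apply: (@le_trans _ _ (\sum_(j < d) `|A i j|)).
      apply: ler_sum => j _; rewrite normrM.
      by apply: ler_piMr => //; rewrite normr_ge0.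
    rewrite /M (bigD1 i) //= lerDl.
    by apply: sumr_ge0 => i' _; apply: sumr_ge0 => j _; rewrite normr_ge0.
  rewrite -real_normK ?num_real //.
  by rewrite ler_pXn2r // ?nnegrE ?normr_ge0 // (le_trans _ Hi) ?normr_ge0.
have [e0|ne0] := eqVneq (sq e) 0.
  by rewrite (sq_eq0 e0) mulmx0 /sq !dot0l mulr0.
have se : 0 < sq e by rewrite lt_def ne0 sq_ge0.
set r := norm2 e.
have r0 : 0 < r by rewrite /r /norm2 sqrtr_gt0.
have r2 : r ^+ 2 = sq e by rewrite /r norm2_sq.
set e' := r^-1 *: e.
have He' : sq e' = 1.
  by rewrite /e' sqZ -r2 exprVn mulVf // expf_neq0 // gt_eqF.
have Hn : norm2 e' <= 1 by rewrite /norm2 -/(sq e') He' sqrtr1.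
have HS : S (norm2 (A *m e')) by exists e'.
have Hle := ub_le_sup hub HS.
have H0 := norm2_ge0 (A *m e').
have Hsq : sq (A *m e') <= opnorm2 A ^+ 2.
  rewrite -norm2_sq; rewrite ler_pXn2r // nnegrE //; exact: le_trans Hle.
have E : sq (A *m e') = r ^-2 * sq (A *m e).
  by rewrite /e' -scalemxAr sqZ exprVn.
rewrite E in Hsq.
rewrite -r2.
have := ler_wpM2l (x := r ^+ 2) (ltW (exprn_gt0 2 r0)) Hsq.
rewrite mulrA mulfV ?mul1r ?(mulrC (r ^+ 2)) //.
by rewrite gt_eqF // exprn_gt0.
Qed.

End Opnorm.


Section Prox.
Variable R : realType.

Lemma le_small (a b K : R) : 0 <= K -> (forall l : R, 0 < l < 1 -> a <= b + l * K) -> a <= b.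
Proof.
move=> K0 H; rewrite leNgt; apply/negP => ab.
set D := a - b.
have D0 : 0 < D by rewrite subr_gt0.
have DK : 0 < D + K by rewrite ltr_wpDr.
set l := D / (2 * (D + K)).
have l0 : 0 < l by rewrite divr_gt0 // mulr_gt0.
have l1 : l < 1 by rewrite ltr_pdivrMr ?mulr_gt0 // mul1r; lra.
have := H l; rewrite l0 l1 => /(_ isT).
have : l * K < D.
  rewrite /l mulrAC ltr_pdivrMr ?mulr_gt0 //; nra.
rewrite /D; lra.
Qed.

Lemma fin_le (x : \bar R) (r : R) : x != -oo%E -> (x <= r%:E)%E -> x \is a fin_num.
Proof. by case: x. Qed.

Lemma prox_ineq k (phi : 'cV[R]_k -> \bar R) (mu c : R) (u v w : 'cV[R]_k) :
  0 <= mu -> 0 < c -> strongly_convex mu phi -> (forall x, phi x != -oo%E) ->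
  is_prox (scalef c phi) u v -> phi w \is a fin_num ->
  phi v \is a fin_num /\
  c * fine (phi v) + 2^-1 * sq (v - u) + (1 + c * mu) / 2 * sq (w - v)
    <= c * fine (phi w) + 2^-1 * sq (w - u).
Proof.
move=> mu0 c0 sc ninf prox finw.
have Ew := fineK finw; set b := fine (phi w) in Ew *.
have Hw := prox w; rewrite /scalef -Ew in Hw.
have finv : phi v \is a fin_num.
  move: Hw (ninf v); case: (phi v) => // Hw _.
  by rewrite gt0_muley ?lte_fin // addye in Hw.
have Ev := fineK finv; set a := fine (phi v) in Ev *.
split => //.
have key : forall l : R, 0 < l < 1 ->
    c * a <= c * b + dot (v - u) (w - v) - c * mu / 2 * sq (w - v)
             + l * ((c * mu / 2 + 2^-1) * sq (w - v)).
  move=> l /andP [l0 l1].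
  have scl := sc w v l; rewrite l0 l1 -Ew -Ev in scl.
  have {}scl := scl isT.
  have {}scl : (phi (l *: w + (1 - l) *: v)%R <=
     (l * b + (1 - l) * a - mu / 2 * l * (1 - l) * norm2 (w - v) ^+ 2)%:E)%E.
    by move: scl; rewrite EFinB EFinD !EFinM.
  have finl := fin_le (ninf _) scl.
  have El := fineK finl.
  set p := fine (phi (l *: w + (1 - l) *: v)) in El.
  rewrite -El lee_fin in scl.
  have Hl := prox (l *: w + (1 - l) *: v).
  rewrite /scalef -El -Ev -!EFinM -!EFinD lee_fin in Hl.
  have E1 : l *: w + (1 - l) *: v - u = (v - u) + l *: (w - v).
    by apply/matrixP => i j; rewrite !mxE; ring.
  rewrite E1 !norm2_sq (sqD (v - u)) dotZr sqZ in Hl.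
  rewrite norm2_sq in scl.
  have H1 : c * p <= c * (l * b + (1 - l) * a - mu / 2 * l * (1 - l) * sq (w - v)).
    by rewrite ler_wpM2l // ltW.
  have H2 : l * (c * a - (c * b + dot (v - u) (w - v) - c * mu / 2 * sq (w - v)
             + l * ((c * mu / 2 + 2^-1) * sq (w - v)))) <= 0.
    have -> : l * (c * a - (c * b + dot (v - u) (w - v) - c * mu / 2 * sq (w - v)
             + l * ((c * mu / 2 + 2^-1) * sq (w - v)))) =
       c * a + 2^-1 * sq (v - u) -
       (c * (l * b + (1 - l) * a - mu / 2 * l * (1 - l) * sq (w - v)) +
        2^-1 * (sq (v - u) + 2 * (l * dot (v - u) (w - v)) + l ^+ 2 * sq (w - v))).
      by field.
    lra.
  rewrite -subr_le0; move: H2; rewrite pmulr_rle0 //.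
have := le_small _ key.
have Sw := sq_ge0 (w - v).
have -> : w - u = (v - u) + (w - v) by apply/matrixP => i j; rewrite !mxE; ring.
rewrite (sqD (v - u)).
move=> /(_ (mulr_ge0 (addr_ge0 (mulr_ge0 (mulr_ge0 (ltW c0) mu0) _) _) Sw)).
rewrite invr_ge0 ler0n => /(_ isT isT) H.
lra.
Qed.

End Prox.


Section Descent.
Variable R : realType.
Variable k : nat.

Lemma grad_dot (h : 'cV[R]_k -> R) p d : 'd h p d = dot (grad h p) d.
Proof.
rewrite {1}(matrix_sum_delta d) linear_sum /dot; apply: eq_bigr => i _.
by rewrite big_ord1 linearZ /= mxE mulrC.
Qed.

Lemma dphi (h : 'cV[R]_k -> R) (x d : 'cV[R]_k) (s : R) : (forall x, differentiable h x) ->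
  is_derive s 1 (fun s : R => h (x + s *: d)) (dot (grad h (x + s *: d)) d).
Proof.
move=> dh.
set phi := (fun s : R => h (x + s *: d)).
set a := x + s *: d.
have E : (fun r : R => r^-1 *: ((phi \o shift s) (r *: 1) - phi s)) =
         (fun r : R => r^-1 *: ((h \o shift a) (r *: d) - h a)).
  apply/funext => r /=; rewrite /phi /a; congr (_ *: (h _ - _)).
  by apply/matrixP => i j; rewrite !mxE -[r%:A]/(r * 1) mulr1; ring.
have da : derivable phi s 1 by rewrite /derivable E; exact: diff_derivable.
apply: DeriveDef => //.
rewrite /derive E -/(derive h a d) deriveE //; exact: grad_dot.
Qed.

Lemma descent (h : 'cV[R]_k -> R) (L : R) (x z : 'cV[R]_k) : (forall x, differentiable h x) ->
  (forall x y, norm2 (grad h x - grad h y) <= L * norm2 (x - y)) -> 0 <= L ->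
  h z <= h x + dot (grad h x) (z - x) + L / 2 * sq (z - x).
Proof.
move=> dh lip L0.
set d := z - x.
set c0 := dot (grad h x) d.
set K := L / 2 * sq d.
pose phi := (fun s : R => h (x + s *: d)).
pose psi := phi - (c0 \*: (@id R) + K \*: ((@id R) ^+ 2)).
have dpsi : forall s : R, is_derive s (1 : R) psi
   (dot (grad h (x + s *: d)) d - (c0 *: 1 + K *: ((2%:R * (id s) ^+ 1) *: 1))).
  move=> s; apply: is_deriveB; first exact: dphi.
have dv : forall s : R, derivable psi s 1 by move=> s; case: (dpsi s).
have [c cin Hc] := @MVT R psi _ 0 1 ltr01 (fun s _ => dpsi s)
   (derivable_within_continuous (fun s _ => dv s)).
move: cin; rewrite in_itv /= => /andP [c0' c1].
have Hd : dot (grad h (x + c *: d)) d - c0 <= L * c * sq d.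
  rewrite /c0 -dotBl.
  set a := grad h (x + c *: d) - grad h x.
  have Ha : sq a <= (L * c) ^+ 2 * sq d.
    have := lip (x + c *: d) x; rewrite -/a.
    have -> : x + c *: d - x = c *: d by apply/matrixP => i j; rewrite !mxE; ring.
    move=> H; have := norm2_ge0 a => H0.
    have H2 : norm2 a ^+ 2 <= (L * norm2 (c *: d)) ^+ 2.
      by rewrite ler_pXn2r // nnegrE // (le_trans H0 H).
    by move: H2; rewrite exprMn norm2_sq norm2_sq sqZ exprMn mulrA.
  have [L0'|Lp] := eqVneq L 0.
    rewrite L0' mul0r expr0n /= mul0r in Ha.
    have := sq_ge0 a => Ha0.
    have -> : a = 0 by apply: sq_eq0; apply/eqP; rewrite eq_le Ha Ha0.
    by rewrite dot0l L0' !mul0r.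
  have Lc : 0 < L * c by rewrite mulr_gt0 // lt_def Lp L0.
  have := dot_young d a Lc; rewrite dotC.
  have : (L * c)^-1 * sq a <= (L * c)^-1 * ((L * c) ^+ 2 * sq d).
    by rewrite ler_wpM2l // invr_ge0 ltW.
  have -> : (L * c)^-1 * ((L * c) ^+ 2 * sq d) = L * c * sq d.
    by field; rewrite gt_eqF.
  lra.
have Hd' : dot (grad h (x + c *: d)) d - (c0 *: 1 + K *: ((2%:R * (id c) ^+ 1) *: 1)) <= 0.
  have -> : (c0 *: 1 + K *: ((2%:R * (id c) ^+ 1) *: 1)) = c0 + 2 * c * K :> R.
    rewrite -[c0 *: 1]/(c0 * 1) -[_ *: (1:R)]/(_ * 1) -[K *: _]/(K * _) !mulr1 expr1 /=.
    ring.
  have EK : 2 * c * K = L * c * sq d by rewrite /K; field.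
  lra.
have : psi 1 <= psi 0.
  rewrite -subr_le0 Hc subr0 mulr1 //.
have E1 : psi 1 = h (x + 1 *: d) - (c0 * 1 + K * (1 * 1)) by [].
have E0 : psi 0 = h (x + 0 *: d) - (c0 * 0 + K * (0 * 0)) by [].
rewrite E1 E0 scale1r scale0r addr0 !mulr0 !mulr1 addr0 subr0.
have -> : x + d = z by rewrite /d; apply/matrixP => i j; rewrite !mxE; ring.
lra.
Qed.


End Descent.


Section Conj.
Variable R : realType.
Variable k : nat.
Implicit Types f : 'cV[R]_k -> \bar R.

Lemma sq_convex (l : R) (a b : 'cV[R]_k) :
  l * sq a + (1 - l) * sq b - l * (1 - l) * sq (a - b) = sq (l *: a + (1 - l) *: b).
Proof. rewrite sqB sqD !sqZ dotZl dotZr; ring. Qed.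

Lemma conj_ge f y x : f x \is a fin_num -> ((dot y x - fine (f x))%:E <= conj_fun f y)%E.
Proof.
move=> fx; apply: ereal_sup_ubound; exists x => //.
by rewrite -(fineK fx).
Qed.

Lemma conj_ninf f : (exists x, f x != +oo%E) -> (forall x, f x != -oo%E) ->
  forall y, conj_fun f y != -oo%E.
Proof.
move=> [x0 H0] ninf y.
have fx : f x0 \is a fin_num by rewrite fin_numE H0 ninf.
have := conj_ge y fx; by case: (conj_fun f y).
Qed.

Lemma conj_lb f (gamma : R) : 0 <= gamma -> smooth_inv gamma f ->
  forall x, f x \is a fin_num -> exists G, forall y,
    ((dot y x - fine (f x) + gamma / 2 * sq (y - G))%:E <= conj_fun f y)%E.
Proof.
move=> g0 [->|[gp [h [Eh dh lip]]]] x fx.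
  by exists 0 => y; rewrite mul0r mul0r addr0; apply: conj_ge.
exists (grad h x) => y.
set G := grad h x.
set z := x + gamma *: (y - G).
have fz : f z \is a fin_num by rewrite Eh.
apply: le_trans (conj_ge y fz).
rewrite lee_fin Eh /=.
have gi : 0 <= gamma^-1 by rewrite invr_ge0 ltW.
have := descent x z dh lip gi.
rewrite Eh /= => Hd.
have E1 : z - x = gamma *: (y - G) by rewrite /z; apply/matrixP => i j; rewrite !mxE; ring.
rewrite E1 sqZ dotZr in Hd.
have E2 : dot y z = dot y x + gamma * dot y (y - G) by rewrite /z dotDr dotZr.
rewrite E2.
have E3 : dot y (y - G) = sq (y - G) + dot G (y - G) by rewrite /sq dotBl; ring.
rewrite E3.
have E4 : gamma^-1 / 2 * (gamma ^+ 2 * sq (y - G)) = gamma / 2 * sq (y - G).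
  by field; rewrite gt_eqF.
rewrite E4 in Hd.
lra.
Qed.

Lemma conj_sc f (gamma : R) : 0 <= gamma -> smooth_inv gamma f ->
  (forall x, f x != -oo%E) -> (exists x, f x != +oo%E) ->
  strongly_convex gamma (conj_fun f).
Proof.
move=> g0 sm ninf ex y1 y2 l /andP [l0 l1].
have cn := conj_ninf ex ninf.
apply: ge_ereal_sup => _ [x _ <-].
have [fxi|fxf] := eqVneq (f x) +oo%E.
  by rewrite fxi addeNy leNye.
have fx : f x \is a fin_num by rewrite fin_numE fxf ninf.
have [G HG] := conj_lb g0 sm fx.
have H1 := HG y1; have H2 := HG y2.
rewrite -(fineK fx) norm2_sq.
move: H1 H2 (cn y1) (cn y2).
case: (conj_fun f y1) => [a1| |]; case: (conj_fun f y2) => [a2| |] //=.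
- rewrite !lee_fin => H1 H2 _ _.
  have := sq_convex l (y1 - G) (y2 - G).
  have -> : y1 - G - (y2 - G) = y1 - y2 by apply/matrixP => i j; rewrite !mxE; ring.
  have := sq_ge0 (l *: (y1 - G) + (1 - l) *: (y2 - G)).
  have -> : dot (l *: y1 + (1 - l) *: y2) x = l * dot y1 x + (1 - l) * dot y2 x.
    by rewrite dotDl !dotZl.
  move: (sq (l *: (y1 - G) + (1 - l) *: (y2 - G))) => Q HQ EQ.
  have l1' : 0 < 1 - l by rewrite subr_gt0.
  have H1' := ler_wpM2l (ltW l0) H1.
  have H2' := ler_wpM2l (ltW l1') H2.
  rewrite -EQ in HQ.
  have g2 : 0 <= gamma / 2 by rewrite divr_ge0.
  have HQ2 := mulr_ge0 g2 HQ.
  lra.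
- move=> _ _ _ _; rewrite gt0_muley ?lte_fin ?subr_gt0 // addey //.
  by rewrite leey.
- move=> _ _ _ _; rewrite gt0_muley ?lte_fin // addye //.
  by rewrite leey.
- move=> _ _ _ _; rewrite !gt0_muley ?lte_fin ?subr_gt0 // addye //.
  by rewrite leey.
Qed.

Lemma sc_convex (mu : R) (phi : 'cV[R]_k -> \bar R) : 0 <= mu -> strongly_convex mu phi ->
  forall x y (l : R), 0 < l < 1 ->
    (phi (l *: x + (1 - l) *: y)%R <= l%:E * phi x + (1 - l)%:E * phi y)%E.
Proof.
move=> mu0 sc x y l hl; apply: le_trans (sc x y l hl) _.
apply: geeDl; rewrite -EFinN lee_fin oppr_le0.
apply: mulr_ge0; last by rewrite exprn_ge0 // norm2_ge0.
move: hl => /andP [l0 l1].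
by rewrite !mulr_ge0 // ?divr_ge0 // ?ltW // ?subr_gt0.
Qed.

End Conj.


Section Jensen.
Variable R : realType.

Lemma BmS (w : nat -> R) m : Bm w m.+1 = Bm w m + w m.
Proof. by rewrite /Bm big_ord_recr. Qed.

Lemma Bm0 (w : nat -> R) : Bm w 0 = 0.
Proof. by rewrite /Bm big_ord0. Qed.

Lemma Bm_ge0 (w : nat -> R) m : (forall t, 0 < w t) -> 0 <= Bm w m.
Proof. by move=> wp; apply: sumr_ge0 => i _; apply: ltW. Qed.

Lemma Bm_gt0 (w : nat -> R) m : (forall t, 0 < w t) -> (0 < m)%N -> 0 < Bm w m.
Proof.
move=> wp; case: m => // m _; rewrite BmS.
by apply: ltr_wpDl; [apply: Bm_ge0|].
Qed.

Lemma jensen k (phi : 'cV[R]_k -> \bar R) (w : nat -> R) (z : nat -> 'cV[R]_k) (m : nat) :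
  (forall x y (l : R), 0 < l < 1 ->
     (phi (l *: x + (1 - l) *: y)%R <= l%:E * phi x + (1 - l)%:E * phi y)%E) ->
  (forall t, 0 < w t) -> (0 < m)%N -> (forall t, (t < m)%N -> phi (z t) \is a fin_num) ->
  (phi ((Bm w m)^-1 *: \sum_(t < m) w t *: z t) <=
     ((Bm w m)^-1 * \sum_(t < m) w t * fine (phi (z t)))%:E)%E.
Proof.
move=> cvx wp; elim: m => // m IH _ fin.
case: m IH fin => [|m] IH fin.
  rewrite /Bm !big_ord1 scalerA mulrA !mulVf ?gt_eqF // scale1r mul1r.
  by rewrite fineK // fin.
have IH' := IH isT (fun t ht => fin t (ltnW ht)).
set B := Bm w m.+1.
have B0 : 0 < B by apply: Bm_gt0.
have wm := wp m.+1.
have B'0 : 0 < B + w m.+1 by apply: addr_gt0.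
set l := B / (B + w m.+1).
have l0 : 0 < l by apply: divr_gt0.
have l1 : l < 1 by rewrite /l ltr_pdivrMr // mul1r ltrDl.
rewrite BmS -/B big_ord_recr /= [X in (_ <= ((_ * X)%:E))%E]big_ord_recr /=.
set S := \sum_(i < m.+1) w i *: z i.
set s := \sum_(i < m.+1) w i * fine (phi (z i)).
have E : (B + w m.+1)^-1 *: (S + w m.+1 *: z m.+1) =
         l *: (B^-1 *: S) + (1 - l) *: z m.+1.
  apply/matrixP => i j; rewrite !mxE /l; field.
  by apply/andP; split; rewrite gt_eqF.
rewrite E.
apply: le_trans (cvx _ _ _ _) _; first by rewrite l0 l1.
have fz := fin m.+1 (ltnSn _).
set a := fine (phi (z m.+1)).
have Ea : phi (z m.+1) = a%:E by rewrite /a fineK.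
rewrite Ea.
apply: le_trans.
  apply: leeD2r; apply: lee_wpmul2l; first by rewrite lee_fin ltW.
  exact: IH'.
rewrite -!EFinM -EFinD lee_fin /l le_eqVlt; apply/orP; left; apply/eqP.
rewrite -/B -/s. field. by apply/andP; split; rewrite gt_eqF.
Qed.

End Jensen.


Section Step.
Variable R : realType.

Lemma step_real (be eta tau be1 tau1 mu ga Bt R2 gx gX1 fy fv X1 X2 X3 Y1 V0 V1 SA
   d0 d1 d2 d3 d4 dv K K' Phi0 PsiX : R) :
 0 < be -> 0 < eta -> 0 < tau -> 0 < be1 -> 0 < tau1 -> 0 <= mu -> 0 <= ga -> 0 <= Bt ->
 0 <= X1 -> 0 <= X2 -> 0 <= X3 -> 0 <= Y1 -> 0 <= V1 -> 0 <= SA ->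
 be <= eta * (1 + Bt * mu) -> eta * tau * R2 <= 1 -> be1 / tau1 <= be / tau * (1 + ga * tau) ->
 Phi0 + (1 + Bt * mu) / 2 * X2 <= PsiX ->
 eta * gx + 2^-1 * (X1 + 2 * eta * (d1 - d0) + eta ^+ 2 * K) + (1 + eta * mu) / 2 * X3
   <= eta * gX1 + 2^-1 * (X2 + 2 * eta * (d2 - d0) + eta ^+ 2 * K) ->
 tau * fy + 2^-1 * (Y1 - 2 * tau * (d3 - d1) + tau ^+ 2 * K') + (1 + tau * ga) / 2 * V1
   <= tau * fv + 2^-1 * (V0 - 2 * tau * (dv - d1) + tau ^+ 2 * K') ->
 2 * (d3 - d4 - d1 + d2) <= tau^-1 * Y1 + tau * SA ->
 SA <= R2 * X3 ->
 be * (gx + dv - fv + fy) <=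
   PsiX + be * (gX1 + d4) - Phi0 + be / (2 * tau) * V0 - be1 / (2 * tau1) * V1.
Proof.
move=> b0 e0 t0 b10 t10 m0 g0 B0 X10 X20 X30 Y10 V10 SA0 hb het hbt hi h3 h4 h5 hSA.
rewrite !invfM.
have h3' : gx + X1 / eta / 2 + d1 + (1 + eta * mu) / eta / 2 * X3
        <= gX1 + X2 / eta / 2 + d2.
  rewrite -(ler_pM2l e0).
  have E1 : eta * (gx + X1 / eta / 2 + d1 + (1 + eta * mu) / eta / 2 * X3) =
     eta * gx + 2^-1 * (X1 + 2 * eta * (d1 - d0) + eta ^+ 2 * K) + (1 + eta * mu) / 2 * X3
     + eta * d0 - 2^-1 * eta ^+ 2 * K.
    by field; rewrite gt_eqF.
  have E2 : eta * (gX1 + X2 / eta / 2 + d2) =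
     eta * gX1 + 2^-1 * (X2 + 2 * eta * (d2 - d0) + eta ^+ 2 * K)
     + eta * d0 - 2^-1 * eta ^+ 2 * K.
    by field; rewrite gt_eqF.
  rewrite E1 E2; lra.
have h4' : fy + Y1 / tau / 2 - d3 + (1 + tau * ga) / tau / 2 * V1
        <= fv + V0 / tau / 2 - dv.
  rewrite -(ler_pM2l t0).
  have E1 : tau * (fy + Y1 / tau / 2 - d3 + (1 + tau * ga) / tau / 2 * V1) =
     tau * fy + 2^-1 * (Y1 - 2 * tau * (d3 - d1) + tau ^+ 2 * K') + (1 + tau * ga) / 2 * V1
     - tau * d1 - 2^-1 * tau ^+ 2 * K'.
    by field; rewrite gt_eqF.
  have E2 : tau * (fv + V0 / tau / 2 - dv) =
     tau * fv + 2^-1 * (V0 - 2 * tau * (dv - d1) + tau ^+ 2 * K')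
     - tau * d1 - 2^-1 * tau ^+ 2 * K'.
    by field; rewrite gt_eqF.
  rewrite E1 E2; lra.
have h3b := ler_wpM2l (ltW b0) h3'.
have h4b := ler_wpM2l (ltW b0) h4'.
have hbe : be / eta <= 1 + Bt * mu by rewrite ler_pdivrMr // mulrC.
have hX2 := ler_wpM2r (divr_ge0 X20 (ler0n _ 2)) hbe.
have htR : tau * R2 <= eta^-1.
  by rewrite -(ler_pM2l e0) mulrA mulfV ?gt_eqF.
have hSA1 : tau * SA <= tau * R2 * X3.
  by rewrite -mulrA ler_wpM2l // ltW.
have hSA2 := ler_wpM2r X30 htR.
have h5b := ler_wpM2l (divr_ge0 (ltW b0) (ler0n _ 2)) h5.
have hSA3 : be / 2 * (tau * SA) <= be / 2 * (eta^-1 * X3).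
  by rewrite ler_wpM2l ?divr_ge0 ?(ltW b0) //; apply: le_trans hSA1 hSA2.
have hV := ler_wpM2r (divr_ge0 V10 (ler0n _ 2)) hbt.
have p1 : 0 <= be * (X1 / eta / 2) by rewrite !mulr_ge0 // ?invr_ge0 ltW.
have p2 : 0 <= be * mu * X3 by rewrite !mulr_ge0 // ltW.
have E3 : be * ((1 + eta * mu) / eta / 2 * X3) = be * (eta^-1 * X3) / 2 + be * mu * X3 / 2.
  by field; rewrite gt_eqF.
have E4 : be * ((1 + tau * ga) / tau / 2 * V1) = be / tau * (1 + ga * tau) * (V1 / 2).
  by field; rewrite gt_eqF.
have E5 : be1 / tau1 * (V1 / 2) = be1 * (2^-1 * tau1^-1) * V1 by ring.
have E6 : be / 2 * (tau^-1 * Y1) = be * (Y1 / tau / 2) by ring.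
have E7 : be / eta * (X2 / 2) = be * (X2 / eta / 2) by ring.
lra.
Qed.

End Step.


Section Aux.
Variable R : realType.

Lemma sq_sym k (a b : 'cV[R]_k) : sq (a - b) = sq (b - a).
Proof. by rewrite -opprB /sq dotNl dotNr opprK. Qed.

Lemma dot_sumr k (I : nat) (F : 'I_I -> 'cV[R]_k) v :
  dot v (\sum_(i < I) F i) = \sum_(i < I) dot v (F i).
Proof. by rewrite dotC dot_suml; apply: eq_bigr => i _; rewrite dotC. Qed.

Lemma psi_alt k (c a : R) (s z x0 : 'cV[R]_k) :
  c * a + dot s z + 2^-1 * sq (z - x0) =
  c * a + 2^-1 * sq (z - (x0 - s)) + (dot s x0 - 2^-1 * sq s).
Proof.
have -> : z - (x0 - s) = (z - x0) + s by apply/matrixP => i j; rewrite !mxE; ring.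
rewrite (sqD (z - x0) s) dotBl (dotC z s) (dotC x0 s); by field.
Qed.

Lemma sq_shiftx n d (A : 'M[R]_(n, d)) (z p : 'cV[R]_d) (c : R) (y : 'cV[R]_n) :
  sq (z - (p - c *: (A^T *m y))) =
  sq (z - p) + 2 * c * (dot y (A *m z) - dot y (A *m p)) + c ^+ 2 * sq (A^T *m y).
Proof.
have -> : z - (p - c *: (A^T *m y)) = (z - p) + c *: (A^T *m y).
  by apply/matrixP => i j; rewrite !mxE; ring.
rewrite (sqD (z - p)) sqZ dotZr dotC dot_trmx mulmxBr dotBr; ring.
Qed.

Lemma sq_shifty k (z p q : 'cV[R]_k) (c : R) :
  sq (z - (p + c *: q)) = sq (z - p) - 2 * c * (dot z q - dot p q) + c ^+ 2 * sq q.
Proof.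
have -> : z - (p + c *: q) = (z - p) - c *: q by apply/matrixP => i j; rewrite !mxE; ring.
rewrite (sqB (z - p)) sqZ dotZr dotBl; ring.
Qed.

Lemma telescope_ord (b : nat -> R) n : \sum_(t < n) (b t.+1 - b t) = b n - b 0.
Proof.
elim: n => [|n IH]; first by rewrite big_ord0 subrr.
by rewrite big_ord_recr /= IH; ring.
Qed.

End Aux.


Lemma sum_lin (R : realType) (T : nat) (be a b h k : nat -> R) (c e : R) :
 \sum_(t < T) be t * (a t + b t - c - e - h t + k t) =
 \sum_(t < T) be t * a t + \sum_(t < T) be t * b t - Bm be T * c - Bm be T * e
 - \sum_(t < T) be t * h t + \sum_(t < T) be t * k t.
Proof.
elim: T => [|T IH]; first by rewrite /Bm !big_ord0; ring.
by rewrite BmS !big_ord_recr /= IH; ring.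
Qed.

End Helpers.
Import Helpers.

Theorem theorem2p3 (R : realType) (n d : nat) (A : 'M[R]_(n, d))
  (f : 'cV[R]_n -> \bar R) (g : 'cV[R]_d -> \bar R) (gamma mu : R)
  (beta eta tau : nat -> R) (T : nat)
  (xbar x : nat -> 'cV[R]_d) (y : nat -> 'cV[R]_n) :
  closed_proper_convex f -> closed_proper_convex g ->
  0 <= gamma -> smooth_inv gamma f ->
  0 <= mu -> strongly_convex mu g ->
  (1 <= T)%N ->
  (forall t, 0 < beta t) -> (forall t, 0 < eta t) -> (forall t, 0 < tau t) ->
  (forall t, (t < T)%N ->
     [/\ beta t <= eta t * (1 + Bm beta t * mu),
         eta t * tau t * opnorm2 A ^+ 2 <= 1 &
         beta t.+1 / tau t.+1 <= beta t / tau t * (1 + gamma * tau t)]) ->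
  (forall t, (t < T)%N ->
     [/\ is_prox (scalef (eta t) g) (x t - eta t *: (A^T *m y t)) (xbar t.+1),
         is_prox (scalef (tau t) (conj_fun f)) (y t + tau t *: (A *m xbar t.+1)) (y t.+1) &
         is_prox (scalef (Bm beta t.+1) g)
           (x 0 - \sum_(k < t.+1) beta k *: (A^T *m y k.+1)) (x t.+1)]) ->
  let xhat := (Bm beta T)^-1 *: \sum_(t < T) beta t *: xbar t.+1 in
  let yhat := (Bm beta T)^-1 *: \sum_(t < T) beta t *: y t.+1 in
  forall (u : 'cV[R]_d) (v : 'cV[R]_n),
    (saddleF A f g xhat v - saddleF A f g u yhat <=
      ((Bm beta T)^-1 * (beta 0 / (2 * tau 0) * norm2 (y 0 - v) ^+ 2
                         + 2^-1 * norm2 (x 0 - u) ^+ 2))%:E)%E.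
Proof.
move=> cpf cpg g0 smf mu0 scg T1 bp ep tp Hc Hp xhat yhat u v.
case: cpf => fninf [xf0 Hxf0] _ _.
case: cpg => gninf [xg0 Hxg0] _ _.
have fex : exists x, f x != +oo%E by exists xf0.
have cninf := conj_ninf fex fninf.
have csc := conj_sc g0 smf fninf fex.
have gw0 : g xg0 \is a fin_num by rewrite fin_numE Hxg0 gninf.
have B0 : 0 < Bm beta T := Bm_gt0 bp T1.
have [fvi|fvf] := eqVneq (conj_fun f v) +oo%E.
  by rewrite /saddleF fvi /= addeNy addNye leNye.
have fvfin : conj_fun f v \is a fin_num by rewrite fin_numE fvf cninf.
have PX : forall t, (t < T)%N -> forall w, g w \is a fin_num ->
   g (xbar t.+1) \is a fin_num /\
   eta t * fine (g (xbar t.+1)) + 2^-1 * sq (xbar t.+1 - (x t - eta t *: (A^T *m y t)))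
   + (1 + eta t * mu) / 2 * sq (w - xbar t.+1)
   <= eta t * fine (g w) + 2^-1 * sq (w - (x t - eta t *: (A^T *m y t))).
  move=> t ht w gw; case: (Hp t ht) => H _ _.
  exact: prox_ineq mu0 (ep t) scg gninf H gw.
have PY : forall t, (t < T)%N ->
   conj_fun f (y t.+1) \is a fin_num /\
   tau t * fine (conj_fun f (y t.+1)) + 2^-1 * sq (y t.+1 - (y t + tau t *: (A *m xbar t.+1)))
   + (1 + tau t * gamma) / 2 * sq (v - y t.+1)
   <= tau t * fine (conj_fun f v) + 2^-1 * sq (v - (y t + tau t *: (A *m xbar t.+1))).
  move=> t ht; case: (Hp t ht) => _ H _.
  exact: prox_ineq g0 (tp t) csc cninf H fvfin.
have PZ : forall t, (t < T)%N -> forall w, g w \is a fin_num ->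
   g (x t.+1) \is a fin_num /\
   Bm beta t.+1 * fine (g (x t.+1))
   + 2^-1 * sq (x t.+1 - (x 0 - \sum_(k < t.+1) beta k *: (A^T *m y k.+1)))
   + (1 + Bm beta t.+1 * mu) / 2 * sq (w - x t.+1)
   <= Bm beta t.+1 * fine (g w)
      + 2^-1 * sq (w - (x 0 - \sum_(k < t.+1) beta k *: (A^T *m y k.+1))).
  move=> t ht w gw; case: (Hp t ht) => _ _ H.
  exact: prox_ineq mu0 (Bm_gt0 bp (ltn0Sn t)) scg gninf H gw.
have gxf : forall t, (t < T)%N -> g (xbar t.+1) \is a fin_num.
  by move=> t ht; case: (PX t ht xg0 gw0).
have gXf : forall t, (t < T)%N -> g (x t.+1) \is a fin_num.
  by move=> t ht; case: (PZ t ht xg0 gw0).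
have fyf : forall t, (t < T)%N -> conj_fun f (y t.+1) \is a fin_num.
  by move=> t ht; case: (PY t ht).
have Jg : (g xhat <= ((Bm beta T)^-1 *
            \sum_(t < T) beta t * fine (g (xbar t.+1)))%:E)%E.
  exact: (jensen (z := fun t => xbar t.+1) (sc_convex mu0 scg) bp T1 gxf).
have Jf : (conj_fun f yhat <= ((Bm beta T)^-1 *
            \sum_(t < T) beta t * fine (conj_fun f (y t.+1)))%:E)%E.
  exact: (jensen (z := fun t => y t.+1) (sc_convex g0 csc) bp T1 fyf).
have gxhf := fin_le (gninf _) Jg.
have fyhf := fin_le (cninf _) Jf.
have [gui|guf] := eqVneq (g u) +oo%E.
  rewrite /saddleF gui -(fineK gxhf) -(fineK fvfin) -(fineK fyhf).
  by rewrite [X in (X <= _)%E](_ : _ = -oo%E) ?leNye.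
have gufin : g u \is a fin_num by rewrite fin_numE guf gninf.
have Edv : dot v (A *m xhat) =
    (Bm beta T)^-1 * \sum_(t < T) beta t * dot v (A *m xbar t.+1).
  rewrite /xhat -scalemxAr dotZr mulmx_sumr dot_sumr; congr (_ * _).
  by apply: eq_bigr => t _; rewrite -scalemxAr dotZr.
have Edu : dot yhat (A *m u) =
    (Bm beta T)^-1 * \sum_(t < T) beta t * dot (y t.+1) (A *m u).
  rewrite /yhat dotZl dot_suml; congr (_ * _).
  by apply: eq_bigr => t _; rewrite dotZl.
pose s t := \sum_(k < t) beta k *: (A^T *m y k.+1).
pose Psi t w := Bm beta t * fine (g w) + dot (s t) w + 2^-1 * sq (w - x 0).
pose Phi t := Psi t (x t).
pose P t := beta t / (2 * tau t) * sq (v - y t).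
pose b t := Phi t - P t - (Psi t u - 2^-1 * sq (u - x 0)).
have QZ : forall t, (t <= T)%N -> forall w, g w \is a fin_num ->
    Phi t + (1 + Bm beta t * mu) / 2 * sq (w - x t) <= Psi t w.
  case=> [|t] ht w gw.
    rewrite /Phi /Psi /s Bm0 big_ord0 !mul0r !dot0l subrr /sq dot0l; lra.
  have [_ H] := PZ t ht w gw.
  rewrite /Phi /Psi /s !psi_alt; lra.
have PsiS : forall t w, Psi t.+1 w =
    Psi t w + beta t * (fine (g w) + dot (y t.+1) (A *m w)).
  by move=> t w; rewrite /Psi /s BmS big_ord_recr /= dotDl dotZl dot_trmx; ring.
have step : forall t, (t < T)%N ->
    beta t * (fine (g (xbar t.+1)) + dot v (A *m xbar t.+1) - fine (conj_fun f v)
      - fine (g u) - dot (y t.+1) (A *m u) + fine (conj_fun f (y t.+1)))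
    <= b t.+1 - b t.
  move=> t ht.
  case: (Hc t ht) => hb het hbt.
  have [_ h3] := PX t ht (x t.+1) (gXf t ht).
  have [_ h4] := PY t ht.
  have hi := QZ t (ltnW ht) (x t.+1) (gXf t ht).
  rewrite !sq_shiftx in h3.
  rewrite !sq_shifty in h4.
  have tinv : 0 < (tau t)^-1 by rewrite invr_gt0.
  have h5 := dot_young (y t.+1 - y t) (A *m (xbar t.+1 - x t.+1)) tinv.
  rewrite invrK in h5.
  have E5 : dot (y t.+1 - y t) (A *m (xbar t.+1 - x t.+1)) =
     dot (y t.+1) (A *m xbar t.+1) - dot (y t.+1) (A *m x t.+1)
     - dot (y t) (A *m xbar t.+1) + dot (y t) (A *m x t.+1).
    by rewrite mulmxBr dotBl !dotBr; ring.
  rewrite E5 in h5.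
  have hSA := opnorm_bound A (xbar t.+1 - x t.+1).
  rewrite (sq_sym (xbar t.+1)) in hSA.
  have := step_real (bp t) (ep t) (tp t) (bp t.+1) (tp t.+1) mu0 g0 (Bm_ge0 t bp)
    (sq_ge0 _) (sq_ge0 _) (sq_ge0 _) (sq_ge0 _) (sq_ge0 _) (sq_ge0 _)
    hb het hbt hi h3 h4 h5 hSA.
  have EPhi : Phi t.+1 = Psi t (x t.+1) + beta t * (fine (g (x t.+1))
                 + dot (y t.+1) (A *m x t.+1)) := PsiS t (x t.+1).
  rewrite /b EPhi (PsiS t u) /P.
  lra.
have SUM : \sum_(t < T)
    beta t * (fine (g (xbar t.+1)) + dot v (A *m xbar t.+1) - fine (conj_fun f v)
      - fine (g u) - dot (y t.+1) (A *m u) + fine (conj_fun f (y t.+1)))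
    <= b T - b 0.
  rewrite -telescope_ord; apply: ler_sum => i _; exact: step i (ltn_ord i).
have b0 : b 0 = - P 0.
  rewrite /b /Phi /Psi /s Bm0 big_ord0 !mul0r !dot0l subrr /sq dot0l; ring.
have bT : b T <= 2^-1 * sq (u - x 0) - P T.
  have := QZ T (leqnn T) u gufin.
  have c0 : 0 <= (1 + Bm beta T * mu) / 2 * sq (u - x T).
    by rewrite mulr_ge0 ?sq_ge0 // divr_ge0 // addr_ge0 // mulr_ge0 // Bm_ge0.
  rewrite /b; lra.
have PT : 0 <= P T by rewrite /P mulr_ge0 ?sq_ge0 // divr_ge0 ?mulr_ge0 // ltW.
rewrite (sum_lin T beta (fun t => fine (g (xbar t.+1))) (fun t => dot v (A *m xbar t.+1)) (fun t => dot (y t.+1) (A *m u)) (fun t => fine (conj_fun f (y t.+1)))) /= in SUM.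
have {}Jg : fine (g xhat) <= (Bm beta T)^-1 * \sum_(t < T) beta t * fine (g (xbar t.+1)).
  by rewrite -lee_fin fineK.
have {}Jf : fine (conj_fun f yhat) <=
    (Bm beta T)^-1 * \sum_(t < T) beta t * fine (conj_fun f (y t.+1)).
  by rewrite -lee_fin fineK.
rewrite /saddleF -(fineK gxhf) -(fineK fvfin) -(fineK fyhf) -(fineK gufin).
rewrite [X in (X <= _)%E](_ : _ = ((fine (g xhat) + dot v (A *m xhat) - fine (conj_fun f v))
   - (fine (g u) + dot yhat (A *m u) - fine (conj_fun f yhat)))%:E) // lee_fin.
rewrite !norm2_sq (sq_sym (y 0)) (sq_sym (x 0)) Edv Edu.
have Binv : 0 <= (Bm beta T)^-1 by rewrite invr_ge0 ltW.
have M := ler_wpM2l Binv SUM.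
rewrite b0 in M.
have Ebig : forall S1 S2 S5 S6 c e : R,
   (Bm beta T)^-1 * (S1 + S2 - Bm beta T * c - Bm beta T * e - S5 + S6) =
   (Bm beta T)^-1 * S1 + (Bm beta T)^-1 * S2 - c - e - (Bm beta T)^-1 * S5
   + (Bm beta T)^-1 * S6.
  by move=> *; field; rewrite gt_eqF.
rewrite Ebig in M.
have hbT := ler_wpM2l Binv bT.
have hPT := mulr_ge0 Binv PT.
move: M hbT hPT; rewrite /P => M hbT hPT.
lra.
Qed.
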